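(* Let $F$ be an infinite field, $n>1$ an integer, and $p\in F[x]$ a nonconstant polynomial. Then every noncentral matrix in $\mathrm{M}_n(F)$ with trace zero belongs to $p[\mathrm{M}_n(F),\mathrm{M}_n(F)]=\{p(AB)-p(BA)\mid A,B\in\mathrm{M}_n(F)\}$. Moreover, if $F$ has characteristic zero, then $$p[\mathrm{M}_n(F),\mathrm{M}_n(F)]=\{A\in\mathrm{M}_n(F)\mid \mathrm{trace}(A)=0\}.$$ *)

(* Defs.v *)
From mathcomp Require Import all_boot all_algebra.
Set Implicit Arguments. Unset Strict Implicit. Unset Printing Implicit Defensive.
Import GRing.Theory.
Local Open Scope ring_scope.

Definition infinite_field (F : fieldType) : Prop :=
  forall s : seq F, exists x : F, x \notin s.

(* Matrices of size n.+1 (so that 'M_n.+1 is a ring); p[M,M] is the image set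
   {p(AB) - p(BA)} where p(X) is polynomial evaluation at a matrix (horner_mx). *)
Definition p_commutator_image (F : fieldType) (n : nat) (p : {poly F})
  (M : 'M[F]_n.+1) : Prop :=
  exists A B : 'M[F]_n.+1, M = horner_mx (A *m B) p - horner_mx (B *m A) p.

(* Main.v *)
Require Import Defs.
From mathcomp Require Import all_boot all_algebra.
From mathcomp Require Import ring fingroup perm.
Import GRing.Theory.
Local Open Scope ring_scope.

Set Implicit Arguments. Unset Strict Implicit. Unset Printing Implicit Defensive.

Section Aux.
Variable F : fieldType.

Lemma charpoly_tr n (A : 'M[F]_n) : char_poly A^T = char_poly A.
Proof.
rewrite /char_poly -det_tr; congr (\det _).
by apply/matrixP => i j; rewrite !mxE eq_sym.
Qed.

Lemma eigen_diag n (T : 'M[F]_n.+1) (d : 'rV[F]_n.+1) :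
  injective (fun i => d 0 i) -> (forall i, eigenvalue T (d 0 i)) ->
  exists2 P, P \in unitmx & P *m T = diag_mx d *m P.
Proof.
move=> dinj ev.
have: forall i, exists v : 'rV_n.+1, (v *m T == d 0 i *: v) && (v != 0).
  move=> i; have /eigenvalueP[v Hv Hv0] := ev i; exists v; by rewrite Hv eqxx.
case/fin_all_exists => v Hv.
exists (\matrix_i v i); last first.
  apply/row_matrixP => i; rewrite row_mul rowK mul_diag_mx.
  case/andP: (Hv i) => /eqP -> _; apply/rowP => j; by rewrite !mxE.
rewrite -row_free_unit -kermx_eq0; apply/rowV0P => x.
rewrite sub_kermx mulmx_sum_row => /eqP x0.
have dx := @mxdirect_sum_eigenspace F _ _ T predT (fun i => d 0 i) (in2W dinj).
apply/rowP => i; rewrite mxE; apply/eqP.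
move/mxdirect_sumsP: dx => /(_ i isT) /eqP cap0.
have Ei : (x 0 i *: v i <= eigenspace T (d 0 i))%MS.
  apply/eigenspaceP; case/andP: (Hv i) => /eqP H _.
  by rewrite -scalemxAl H scalerA mulrC -scalerA.
have Es : (x 0 i *: v i <= \sum_(j | predT j && (j != i)) eigenspace T (d 0 j))%MS.
  have -> : x 0 i *: v i = - \sum_(j | predT j && (j != i)) x 0 j *: row j (\matrix_i v i).
    by move: x0; rewrite (bigD1 i) //= rowK => /eqP; rewrite addr_eq0 => /eqP.
  rewrite (eqmx_opp _); apply: summx_sub_sums => j _; rewrite rowK.
  apply: scalemx_sub; apply/eigenspaceP; by case/andP: (Hv j) => /eqP.
have : (x 0 i *: v i <= eigenspace T (d 0 i) :&: \sum_(j | predT j && (j != i)) eigenspace T (d 0 j))%MS by rewrite sub_capmx Ei Es.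
rewrite (eqP cap0) submx0 scalemx_eq0; case/orP => // v0.
by case/andP: (Hv i) => _; rewrite v0.
Qed.

Lemma horner_conj n (P Y : 'M[F]_n.+1) (p : {poly F}) : P \in unitmx ->
  horner_mx (invmx P *m Y *m P) p = invmx P *m horner_mx Y p *m P.
Proof.
move=> Pu; elim/poly_ind: p => [|p c IH].
  by rewrite !rmorph0 mulmx0 mul0mx.
rewrite !(rmorphD, rmorphM) /= !(horner_mx_X, horner_mx_C) IH.
rewrite -!mulmxE mulmxDr mulmxDl; congr (_ + _).
  by rewrite !mulmxA (mulmxK Pu).
by rewrite scalar_mxC -mulmxA (mulVmx Pu) mulmx1.
Qed.

Lemma uniq_seq (hF : forall s : seq F, exists x : F, x \notin s) k :
  exists s : seq F, size s = k /\ uniq s.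
Proof.
elim: k => [|k [s [Hs Hu]]]; first by exists [::].
have [x Hx] := hF s; exists (x :: s); by rewrite /= Hs Hx Hu.
Qed.

Lemma vals_seq (hF : forall s : seq F, exists x : F, x \notin s) (p : {poly F})
  (hp : (1 < size p)%N) k :
  exists s : seq F, size s = k /\ uniq (map (horner p) s).
Proof.
elim: k => [|k [s [Hs Hu]]]; first by exists [::].
pose q := \prod_(y <- s) (p - (p.[y])%:P).
have q0 : q != 0.
  rewrite prodf_seq_neq0; apply/allP => y _ /=.
  rewrite subr_eq0; apply/negP => /eqP E.
  by move: hp; rewrite E size_polyC; case: (_ != 0).
have [t [Ht Hu']] := uniq_seq hF (size q).
have : ~~ all (root q) t.
  by apply/negP => H; have := max_poly_roots q0 H Hu'; rewrite Ht ltnn.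
case/allPn => x _ Hx.
exists (x :: s); split; first by rewrite /= Hs.
rewrite /= Hu andbT; apply/negP => /mapP [y ys E].
move: Hx; rewrite /root /q horner_prod; apply/negP; rewrite negbK.
rewrite prodf_seq_eq0; apply/hasP; exists y => //.
by rewrite !hornerE E subrr.
Qed.

End Aux.


Section Sim.
Variable F : fieldType.

Definition simx n (M N : 'M[F]_n) :=
  exists S T : 'M[F]_n, S *m T = 1%:M /\ N = S *m M *m T.

Lemma inv_comm n (S T : 'M[F]_n) : S *m T = 1%:M -> T *m S = 1%:M.
Proof.
move=> ST; have [Su _] := mulmx1_unit ST.
have -> : T = invmx S by rewrite -[T](mulKmx Su) ST mulmx1.
exact: mulVmx.
Qed.

Lemma simx_refl n (M : 'M[F]_n) : simx M M.
Proof. by exists 1%:M; exists 1%:M; rewrite mulmx1 mulmx1 mul1mx. Qed.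

Lemma simx_trans n (M N P : 'M[F]_n) : simx M N -> simx N P -> simx M P.
Proof.
move=> [S [T [ST ->]]] [S' [T' [ST' ->]]]; exists (S' *m S); exists (T *m T'); split.
  by rewrite -mulmxA (mulmxA S) ST mul1mx.
by rewrite !mulmxA.
Qed.

Lemma simx_tr n (M N : 'M[F]_n) : simx M N -> \tr N = \tr M.
Proof. by move=> [S [T [ST ->]]]; rewrite mxtrace_mulC mulmxA (inv_comm ST) mul1mx. Qed.

Lemma simx_scalar n (M N : 'M[F]_n) : simx M N -> is_scalar_mx N -> is_scalar_mx M.
Proof.
move=> [S [T [ST ->]]] /is_scalar_mxP [c E]; apply/is_scalar_mxP; exists c.
have TS := inv_comm ST.
have -> : M = T *m (S *m M *m T) *m S.
  by rewrite !mulmxA TS mul1mx -mulmxA TS mulmx1.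
by rewrite E scalar_mxC -mulmxA TS mulmx1.
Qed.

Lemma delta_mulE m n p (i : 'I_m) (j : 'I_n) (N : 'M[F]_(n,p)) x y :
  (delta_mx i j *m N) x y = (x == i)%:R * N j y.
Proof.
rewrite mxE (bigD1 j) //= big1 => [|k kj]; rewrite !mxE ?eqxx ?andbT ?addr0 //.
by rewrite (negPf kj) andbF mul0r.
Qed.

Lemma mul_deltaE m n p (i : 'I_n) (j : 'I_p) (N : 'M[F]_(m,n)) x y :
  (N *m delta_mx i j) x y = N x i * (y == j)%:R.
Proof.
rewrite mxE (bigD1 i) //= big1 => [|k ki]; rewrite !mxE ?eqxx ?addr0 //.
by rewrite (negPf ki) mulr0.
Qed.

Definition elem n (i j : 'I_n) t (M : 'M[F]_n) :=
  \matrix_(x, y) (M x y + t * ((x == i)%:R * M j y) - t * (M x i * (y == j)%:R)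
     - t ^+ 2 * ((x == i)%:R * M j i * (y == j)%:R)).

Lemma simx_elem n (i j : 'I_n) t (M : 'M[F]_n) : i != j -> simx M (elem i j t M).
Proof.
move=> ij; exists (1%:M + t *: delta_mx i j); exists (1%:M - t *: delta_mx i j); split.
  rewrite mulmxDl mulmxBr mulmxBr !mul1mx mulmx1 -scalemxAl -scalemxAr.
  by rewrite mul_delta_mx_0 1?eq_sym // !scaler0 subr0 subrK.
apply/matrixP => x y.
rewrite mulmxDl mul1mx mulmxBr mulmx1 mulmxDl -!scalemxAl -!scalemxAr.
have e1 := delta_mulE i j M x y.
have e2 := mul_deltaE i j M x y.
have e3 : (delta_mx i j *m M *m delta_mx i j) x y = (x == i)%:R * M j i * (y == j)%:R.
  by rewrite mul_deltaE delta_mulE.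
rewrite /elem !mxE in e1 e2 e3 *; rewrite e1 e2 e3; ring.
Qed.


Lemma simx_perm n (s : {perm 'I_n}) (M : 'M[F]_n) : simx M (\matrix_(x, y) M (s x) (s y)).
Proof.
exists (perm_mx s); exists (perm_mx s^-1); split.
  by rewrite -perm_mxM mulgV perm_mx1.
rewrite -row_permE -col_permE; apply/matrixP => x y; by rewrite !mxE.
Qed.

Lemma step1 k (M : 'M[F]_k.+2) : ~~ is_scalar_mx M ->
  exists N, simx M N /\ exists a : 'I_k.+2, a != 0 /\ N a 0 != 0.
Proof.
move=> nsc.
case: (pickP (fun ij : 'I_k.+2 * 'I_k.+2 => (ij.1 != ij.2) && (M ij.2 ij.1 != 0))).
  move=> [i j] /andP [/= ij Mji].
  exists (\matrix_(x, y) M (tperm 0 i x) (tperm 0 i y)); split; first exact: simx_perm.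
  exists (tperm 0 i j); split.
    apply/eqP => E; move: ij; by rewrite -(tpermK 0 i j) E tpermL eqxx.
  by rewrite mxE tpermK tpermL.
move=> H.
have off x y : x != y -> M x y = 0.
  move=> xy; have := H (y, x); rewrite /= eq_sym xy /=; by move/negbFE/eqP.
have [a Ha] : exists a, M a a != M 0 0.
  case: (pickP (fun a => M a a != M 0 0)) => [a Ha|Hall]; first by exists a.
  exfalso; apply: (negP nsc).
  apply/is_scalar_mxP; exists (M 0 0); apply/matrixP => x y; rewrite mxE.
  case: (eqVneq x y) => [<-|xy]; first by move: (Hall x); rewrite /= => /negbFE/eqP ->; rewrite mulr1n.
  by rewrite (off x y xy) mulr0n.
have a0 : a != 0 by apply: contraNneq Ha => ->.
exists (elem a 0 1 M); split; first exact: simx_elem.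
exists a; split => //.
rewrite mxE eqxx (off a 0) // (off 0 a) 1?eq_sym // eqxx.
rewrite !(mul1r, mulr1, mulr0, mul0r, expr1n, add0r, subr0).
by rewrite eq_sym subr_eq0 eq_sym.
Qed.

Lemma step2 k (N : 'M[F]_k.+2) (a : 'I_k.+2) : a != 0 -> N a 0 != 0 ->
  exists N', simx N N' /\ N' 0 0 = 0 /\ N' a 0 != 0.
Proof.
move=> a0 Na0.
have a0' : (0 : 'I_k.+2) != a by rewrite eq_sym.
exists (elem 0 a (- (N 0 0 / N a 0)) N); split; first exact: simx_elem.
rewrite !mxE eqxx (negPf a0') (negPf a0) /= !mul0r !mulr0 !subr0 !addr0 mul1r.
split => //.
by rewrite mulNr divfK // subrr.
Qed.


Lemma step3 k (N : 'M[F]_k.+3) (a : 'I_k.+3) : a != 0 -> N a 0 != 0 -> N 0 0 = 0 ->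
  (forall x y, x != 0 -> y != 0 -> x != y -> N x y = 0) ->
  exists N', simx N N' /\ N' 0 0 = 0 /\
     exists x y, [/\ x != 0, y != 0, x != y & N' x y != 0].
Proof.
move=> a0 Na0 N00 Hoff.
have [b [b0 ba]] : exists b : 'I_k.+3, b != 0 /\ b != a.
  case: (eqVneq a (inord 1)) => [->|a1].
    by exists (inord 2); split; apply/eqP => /(congr1 val); rewrite /= !inordK.
  by exists (inord 1); split; [apply/eqP => /(congr1 val); rewrite /= !inordK | rewrite eq_sym].
have ab : a != b by rewrite eq_sym.
have Nab : N a b = 0 by apply: Hoff.
set t := - (N b 0 / N a 0).
set N1 := elem b a t N.
have N1_00 : N1 0 0 = 0.
  by rewrite /N1 !mxE eq_sym (negPf b0) eq_sym (negPf a0) !mul0r !mulr0 N00 !subr0 addr0.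
have N1_b0 : N1 b 0 = 0.
  rewrite /N1 !mxE eqxx eq_sym (negPf a0) /t !mulr0 !subr0 mul1r.
  by rewrite mulNr divfK // addrN.
have N1_a0 : N1 a 0 = N a 0.
  by rewrite /N1 !mxE (negPf ab) eq_sym (negPf a0) !mul0r !mulr0 !subr0 addr0.
have N1_ab : N1 a b = 0.
  by rewrite /N1 !mxE (negPf ab) (negPf ba) !mul0r !mulr0 !subr0 addr0.
exists (elem 0 b 1 N1); split.
  apply: (simx_trans (M:=N) (N:=N1)); first exact: simx_elem.
  by apply: simx_elem; rewrite eq_sym.
split.
  rewrite [LHS]mxE eqxx eq_sym (negPf b0) N1_00 N1_b0; by rewrite !(mulr0, mul0r, subr0, addr0).
exists a, b; split => //.
rewrite [elem _ _ _ _ _ _]mxE (negPf a0) eqxx N1_ab N1_a0 !mul0r !mulr0 !mul1r mulr1 add0r subr0.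
by rewrite sub0r oppr_eq0.
Qed.


Lemma drsubE m (N : 'M[F]_(1 + m)) x y : drsubmx N x y = N (lift ord0 x) (lift ord0 y).
Proof. by rewrite !mxE; congr (N _ _); apply: val_inj. Qed.

Lemma ulsubE m (N : 'M[F]_(1 + m)) : ulsubmx N 0 0 = N ord0 ord0.
Proof. by rewrite !mxE; congr (N _ _); apply: val_inj. Qed.

Lemma tr_split m (N : 'M[F]_(1 + m)) : \tr N = N ord0 ord0 + \tr (drsubmx N).
Proof. by rewrite -{1}[N]submxK mxtrace_block trace_mx11 ulsubE. Qed.

Lemma simx_block m (N : 'M[F]_(1 + m)) (B' : 'M[F]_m) : simx (drsubmx N) B' ->
  exists N' : 'M[F]_(1 + m), simx N N' /\ ulsubmx N' = ulsubmx N /\ drsubmx N' = B'.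
Proof.
move=> [S [T [ST ->]]].
exists (block_mx 1%:M 0 0 S *m N *m block_mx 1%:M 0 0 T); split.
  exists (block_mx 1%:M 0 0 S); exists (block_mx 1%:M 0 0 T); split => //.
  rewrite mulmx_block !(mulmx0, mul0mx, mulmx1, mul1mx, addr0, add0r) ST.
  by rewrite -scalar_mx_block.
have -> : block_mx 1%:M 0 0 S *m N *m block_mx 1%:M 0 0 T =
   block_mx (ulsubmx N) (ursubmx N *m T) (S *m dlsubmx N) (S *m drsubmx N *m T).
  by rewrite -{1}[N]submxK !mulmx_block !(mulmx0, mul0mx, mulmx1, mul1mx, addr0, add0r).
by rewrite block_mxKul block_mxKdr.
Qed.

Lemma step23 m (N2 : 'M[F]_m.+2) a : a != 0 -> N2 a 0 != 0 -> N2 0 0 = 0 ->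
  exists N3 : 'M_m.+2, simx N2 N3 /\ N3 0 0 = 0 /\
    (m = 0%N \/ ~~ is_scalar_mx (drsubmx (N3 : 'M_(1 + m.+1)))).
Proof.
  case: m a N2 => [|m] a N2 a0 N2a0 N2_00.
    by exists N2; split; [exact: simx_refl | split => //; left].
  case: (boolP (is_scalar_mx (drsubmx (N2 : 'M_(1 + m.+2))))) => [sc|nsc2]; last first.
    by exists N2; split; [exact: simx_refl | split => //; right].
  have [c Ec] := is_scalar_mxP sc.
  have Hoff : forall x y : 'I_m.+3, x != 0 -> y != 0 -> x != y -> N2 x y = 0.
    move=> x y; case: (unliftP ord0 x) => [x' ->|->] //; case: (unliftP ord0 y) => [y' ->|->] //.
    move=> _ _; rewrite (inj_eq (lift_inj (h:=ord0))) => /negPf xy.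
    by rewrite -drsubE Ec mxE xy mulr0n.
  have [N3 [s3 [N3_00 [x [y [x0 y0 xy Nxy]]]]]] := step3 a0 N2a0 N2_00 Hoff.
  exists N3; split => //; split => //; right.
  apply/negP => /is_scalar_mxP [d Ed]; move: Nxy.
  move: xy; case: (unliftP ord0 x) x0 => [x' ->|->] //; case: (unliftP ord0 y) y0 => [y' ->|->] //.
  move=> _ _; rewrite (inj_eq (lift_inj (h:=ord0))) => /negPf xy.
  by rewrite -drsubE Ed mxE xy mulr0n eqxx.
Qed.

Lemma fillmore m (M : 'M[F]_m.+1) : (m = 0%N \/ ~~ is_scalar_mx M) -> \tr M = 0 ->
  exists N, simx M N /\ forall i, N i i = 0.
Proof.
elim: m M => [|m IH] M Hm trM.
  exists M; split; first exact: simx_refl.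
  by move=> i; rewrite (ord1 i) -trM trace_mx11.
case: Hm => // nsc.
have [N1 [s1 [a [a0 Na0]]]] := step1 nsc.
have [N2 [s2 [N2_00 N2a0]]] := step2 a0 Na0.
have [N3 [s3 [N3_00 Hb]]] := step23 a0 N2a0 N2_00.
have trB : \tr (drsubmx (N3 : 'M_(1 + m.+1))) = 0.
  have := tr_split N3; rewrite N3_00 add0r => <-.
  by rewrite (simx_tr s3) (simx_tr s2) (simx_tr s1).
have [B' [sB zB]] := IH _ Hb trB.
have [N4 [s4 [ul4 dr4]]] := simx_block sB.
exists N4; split.
  exact: simx_trans s1 (simx_trans s2 (simx_trans s3 s4)).
move=> i; case: (unliftP ord0 i) => [j ->|->].
  by rewrite -drsubE dr4 zB.
by rewrite -ulsubE ul4 ulsubE.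
Qed.

End Sim.

Unset Implicit Arguments. Set Strict Implicit. Set Printing Implicit Defensive.

Lemma tr_XAB (F : fieldType) n (A B : 'M[F]_n.+1) i :
  \tr ((A *m B) ^+ i) = \tr ((B *m A) ^+ i).
Proof.
case: i => [|i]; first by rewrite !expr0.
have sh : forall j, B * (A * B) ^+ j = (B * A) ^+ j * B.
  elim=> [|j IH]; first by rewrite !expr0 mulr1 mul1r.
  by rewrite exprSr mulrA IH -!mulrA exprSr -!mulrA.
rewrite !mulmxE exprS -mulrA sh -!mulmxE mxtrace_mulC !mulmxE -mulrA -exprSr.
by [].
Qed.

Lemma tr_pAB (F : fieldType) n (A B : 'M[F]_n.+1) (p : {poly F}) :
  \tr (horner_mx (A *m B) p) = \tr (horner_mx (B *m A) p).
Proof.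
rewrite -[p]coefK poly_def !rmorph_sum /= !raddf_sum /=; apply: eq_bigr => i _.
by rewrite -!mul_polyC !rmorphM /= !horner_mx_C !rmorphXn /= !horner_mx_X -!mulmxE !mul_scalar_mx !mxtraceZ tr_XAB.
Qed.

Lemma root_prod_ord (F : fieldType) n (c : 'I_n -> F) j :
  root (\prod_(i < n) ('X - (c i)%:P)) (c j).
Proof.
rewrite /root horner_prod; apply/prodf_eq0; exists j => //.
by rewrite hornerXsubC subrr.
Qed.

Lemma part1 (F : fieldType) k (p : {poly F}) (hF : infinite_field F)
  (hp : (1 < size p)%N) (M : 'M[F]_k.+2) :
  ~~ is_scalar_mx M -> \tr M = 0 -> p_commutator_image p M.
Proof.
move=> nsc trM.
have [N [[S [T [ST EN]]] Nd]] := fillmore (or_intror nsc) trM.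
have [Su _] := mulmx1_unit ST.
have TE : T = invmx S by rewrite -[T](mulKmx Su) ST mulmx1.
have EM : M = invmx S *m N *m S.
  by rewrite EN TE !mulmxA (mulVmx Su) mul1mx (mulmxKV Su).
have [s [Hs Hu]] := vals_seq hF hp k.+2.
pose xv : 'rV[F]_k.+2 := \row_i s`_i.
pose dv : 'rV[F]_k.+2 := \row_i p.[s`_i].
have dinj : injective (fun i => dv 0 i).
  move=> i j; rewrite /dv !mxE => E; apply: val_inj => /=.
  have si : (i < size s)%N by rewrite Hs.
  have sj : (j < size s)%N by rewrite Hs.
  apply/eqP; rewrite -(nth_uniq 0 _ _ Hu) ?size_map // !(nth_map 0) //.
  by rewrite E.
pose W : 'M[F]_k.+2 := \matrix_(i, j) (if i == j then dv 0 i else if (i < j)%N then N i j else 0).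
pose W' := W - N.
have ev1 : forall i, eigenvalue W (dv 0 i).
  move=> i; rewrite eigenvalue_root_char -charpoly_tr char_poly_trig.
    have -> : \prod_(i0 < k.+2) ('X - (W^T i0 i0)%:P) = \prod_(i0 < k.+2) ('X - (dv 0 i0)%:P).
      by apply: eq_bigr => j _; rewrite !mxE eqxx.
    exact: root_prod_ord (fun j => dv 0 j) i.
  apply/is_trig_mxP => i0 j0 lt; rewrite !mxE.
  by rewrite -val_eqE /= (gtn_eqF lt) ltnNge ltnW.
have ev2 : forall i, eigenvalue W' (dv 0 i).
  move=> i; rewrite eigenvalue_root_char char_poly_trig.
    have -> : \prod_(i0 < k.+2) ('X - (W' i0 i0)%:P) = \prod_(i0 < k.+2) ('X - (dv 0 i0)%:P).
      by apply: eq_bigr => j _; rewrite !mxE eqxx Nd subr0.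
    exact: root_prod_ord (fun j => dv 0 j) i.
  apply/is_trig_mxP => i0 j0 lt; rewrite !mxE.
  by rewrite -val_eqE /= (ltn_eqF lt) lt subrr.
have [P Pu PW] := eigen_diag dinj ev1.
have [Q Qu QW] := eigen_diag dinj ev2.
have WE : W = invmx P *m diag_mx dv *m P by rewrite -mulmxA -PW mulmxA (mulVmx Pu) mul1mx.
have W'E : W' = invmx Q *m diag_mx dv *m Q by rewrite -mulmxA -QW mulmxA (mulVmx Qu) mul1mx.
have hD : horner_mx (diag_mx xv) p = diag_mx dv.
  by rewrite horner_mx_diag; congr diag_mx; apply/rowP => i; rewrite !mxE.
exists (invmx S *m (invmx P *m Q) *m S), (invmx S *m (invmx Q *m diag_mx xv *m P) *m S).
have -> : invmx S *m (invmx P *m Q) *m S *m (invmx S *m (invmx Q *m diag_mx xv *m P) *m S)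
   = invmx S *m (invmx P *m diag_mx xv *m P) *m S.
  by rewrite !mulmxA (mulmxK Su) -!mulmxA (mulKVmx Qu).
have -> : invmx S *m (invmx Q *m diag_mx xv *m P) *m S *m (invmx S *m (invmx P *m Q) *m S)
   = invmx S *m (invmx Q *m diag_mx xv *m Q) *m S.
  by rewrite !mulmxA (mulmxK Su) -!mulmxA (mulKVmx Pu).
rewrite !horner_conj // hD -WE -W'E -mulmxBl -mulmxBr /W' opprB addrC subrK.
by [].
Qed.

Theorem corollary3p5 (F : fieldType) (n : nat) (p : {poly F})
  (hF : infinite_field F) (hn : (1 < n.+1)%N) (hp : (1 < size p)%N) :
  (forall M : 'M[F]_n.+1,
     ~~ is_scalar_mx M -> \tr M = 0 -> p_commutator_image p M)
  /\
  ([pchar F] =i pred0 ->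
     forall M : 'M[F]_n.+1, p_commutator_image p M <-> \tr M = 0).
Proof.
case: n hn => [|k] // _.
have P1 := @part1 F k p hF hp.
split => // ch0 M; split.
  by move=> [A [B ->]]; rewrite raddfB /= tr_pAB subrr.
move=> trM; case: (boolP (is_scalar_mx M)) => [sc|nsc]; last exact: P1.
have [c Ec] := is_scalar_mxP sc.
have c0 : c = 0.
  move: trM; rewrite Ec mxtrace_scalar -mulr_natr => /eqP.
  rewrite mulf_eq0 => /orP [/eqP //|].
  by move/pcharf0P: ch0 => ->.
exists 0; exists 0; rewrite Ec c0 subrr; apply/matrixP => i j; by rewrite !mxE mul0rn.
Qed.
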